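(* Let $(\mathcal G,c)$ be a finite connected weighted planar graph and $W\subset\mathcal V\mathcal G$ nonempty. For $x\in\mathcal V\mathcal G$ let $X^x$ be the random walk on $(\mathcal G,c)$ started at $x$ and $\tau_x$ its first hitting time of $W$. Then for all $x,y\in\mathcal V\mathcal G\setminus W$, $$d_{TV}\big(X^x_{\tau_x},X^y_{\tau_y}\big)\le\mathbb P\big(X^x|_{[0,\tau_x]}\text{ does not disconnect }y\text{ from }W\big),$$ where $d_{TV}$ is total variation distance between the laws, and ''$X^x|_{[0,\tau_x]}$ disconnects $y$ from $W$'' means that every path in $\mathcal G$ from $y$ to $W$ visits some vertex in $\{X^x_0,\dots,X^x_{\tau_x}\}$.
   Context: The random walk on a weighted graph $(\mathcal G,c)$ with positive conductances moves from $x$ to $y$ with probability $c_{xy}/\pi(x)$, where $c_{xy}$ is the total conductance of edges joining $x$ and $y$ and $\pi(x)=\sum_{e\ni x}c_e$. *)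

(* Defs.v *)
From HB Require Import structures.
From mathcomp Require Import all_boot all_order all_algebra.
From mathcomp Require Import all_classical all_reals all_analysis.
Set Implicit Arguments. Unset Strict Implicit. Unset Printing Implicit Defensive.
Import Order.TTheory GRing.Theory Num.Theory.
Import numFieldNormedType.Exports.
Local Open Scope classical_set_scope.
Local Open Scope ring_scope.

(* A finite weighted graph on the vertex type V is given by a conductance
   function c : V -> V -> R, symmetric and nonnegative; c x y is the TOTAL
   conductance of the edges joining x and y (loops allowed: c x x). *)

Section Defs.
Variables (R : realType) (V : finType).

Definition conductance (c : V -> V -> R) :=
  (forall x y, c x y = c y x) /\ (forall x y, 0 <= c x y).

Definition adj (c : V -> V -> R) : rel V := fun x y => 0 < c x y.

Definition connected_graph (c : V -> V -> R) :=
  forall x y, connect (adj c) x y.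

Definition planar_embedding (c : V -> V -> R) (pos : V -> R * R)
    (arc : V -> V -> R -> R * R) :=
  injective pos /\
  (forall x y, x != y -> adj c x y ->
     [/\ {within [set t : R | 0 <= t <= 1], continuous (arc x y)},
         arc x y 0 = pos x, arc x y 1 = pos y &
         (forall t, arc y x t = arc x y (1 - t))] /\
     {in [set t : R | 0 <= t <= 1] &, injective (arc x y)} /\
     (forall t z, 0 < t < 1 -> arc x y t <> pos z)) /\
  (forall x y u v s t, x != y -> u != v -> adj c x y -> adj c u v ->
     0 < s < 1 -> 0 < t < 1 -> arc x y s = arc u v t ->
     (x = u /\ y = v) \/ (x = v /\ y = u)).

Definition planar (c : V -> V -> R) :=
  exists pos arc, planar_embedding c pos arc.

Definition pi_c (c : V -> V -> R) (x : V) : R := \sum_(y : V) c x y.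
Definition trans (c : V -> V -> R) (x y : V) : R := c x y / pi_c c x.

Fixpoint pathprob (c : V -> V -> R) (x : V) (s : seq V) : R :=
  if s is y :: s' then trans c x y * pathprob c y s' else 1.

(* x :: s is a trajectory stopped at its first hitting time of W *)
Definition stopped (W : {set V}) (x : V) (s : seq V) : bool :=
  (last x s \in W) && all (fun v => v \notin W) (belast x s).

(* P( (X^x_0, ..., X^x_{tau_x}) satisfies A, tau_x < oo ) *)
Definition Pstop (c : V -> V -> R) (W : {set V}) (x : V)
    (A : pred (seq V)) : \bar R :=
  (\sum_(n <oo) (\sum_(t : n.-tuple V | stopped W x t && A (x :: t))
                   pathprob c x t)%:E)%E.

Definition hitlaw (c : V -> V -> R) (W : {set V}) (x : V) (B : {set V}) :=
  Pstop c W x (fun p => last x p \in B).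

Definition dTV_hit (c : V -> V -> R) (W : {set V}) (x y : V) : \bar R :=
  (\big[maxe/-oo]_(B : {set V}) `| hitlaw c W x B - hitlaw c W y B |)%E.

Definition disconnects (c : V -> V -> R) (S : seq V) (y : V) (W : {set V}) :=
  forall q : seq V, path (adj c) y q -> last y q \in W ->
    has (fun v => v \in S) (y :: q).

End Defs.

(* Main.v *)
Set Warnings "-all".
Require Import Defs.
From HB Require Import structures.
From mathcomp Require Import all_boot all_order all_algebra.
From mathcomp Require Import all_classical all_reals all_analysis.
Import Order.TTheory GRing.Theory Num.Theory.
Local Open Scope ring_scope.
Set Implicit Arguments. Unset Strict Implicit. Unset Printing Implicit Defensive.

Lemma sum_tupleS (R : realType) (V : finType) n (F : n.+1.-tuple V -> R) :
  \sum_(t : n.+1.-tuple V) F t = \sum_(u : V) \sum_(t : n.-tuple V) F [tuple of u :: t].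
Proof.
rewrite pair_big /=.
rewrite (reindex (fun p : V * n.-tuple V => [tuple of p.1 :: p.2])) //=.
exists (fun t : n.+1.-tuple V => (thead t, [tuple of behead t])).
  move=> [u t] _; congr pair; last by apply: val_inj.
by move=> t _; rewrite [in RHS](tuple_eta t); apply: val_inj.
Qed.

Lemma sum_tuple0 (R : realType) (V : finType) (F : 0.-tuple V -> R) :
  \sum_(t : 0.-tuple V) F t = F [tuple].
Proof.
rewrite (big_pred1 [tuple]) // => t; apply/esym/eqP; exact: tuple0.
Qed.

Definition Tn (R : realType) (V : finType) (c : V -> V -> R) (W : {set V}) (n : nat)
  (v : V) (A : pred (seq V)) : R :=
  \sum_(t : n.-tuple V | stopped W v t && A (v :: t)) pathprob c v t.

Lemma PstopE (R : realType) (V : finType) (c : V -> V -> R) (W : {set V}) v A :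
  Pstop c W v A = (\sum_(n <oo) (Tn c W n v A)%:E)%E.
Proof. by []. Qed.

Lemma trans_ge0 (R : realType) (V : finType) (c : V -> V -> R) :
  conductance c -> forall x y, 0 <= trans c x y.
Proof.
move=> [_ c0] x y; rewrite /trans divr_ge0 // /pi_c sumr_ge0 //.
Qed.

Lemma pathprob_ge0 (R : realType) (V : finType) (c : V -> V -> R) :
  conductance c -> forall x s, 0 <= pathprob c x s.
Proof.
move=> hc x s; elim: s x => [|u s IH] x /=; first by [].
by rewrite mulr_ge0 // trans_ge0.
Qed.

Lemma Tn_ge0 (R : realType) (V : finType) (c : V -> V -> R) W n v A :
  conductance c -> 0 <= Tn c W n v A.
Proof. by move=> hc; rewrite /Tn sumr_ge0 // => t _; rewrite pathprob_ge0. Qed.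

Lemma Tn0 (R : realType) (V : finType) (c : V -> V -> R) (W : {set V}) (v : V) (A : pred (seq V)) :
  Tn c W 0 v A = if (v \in W) && A [:: v] then 1 else 0.
Proof.
rewrite /Tn big_mkcond sum_tuple0 /= /stopped /= andbT.
by case: ifP.
Qed.

Lemma TnS (R : realType) (V : finType) (c : V -> V -> R) W n v A :
  Tn c W n.+1 v A = if v \in W then 0 else
     \sum_(u : V) trans c v u * Tn c W n u (fun s => A (v :: s)).
Proof.
rewrite /Tn big_mkcond sum_tupleS.
case: ifP => vW.
  apply: big1 => u _; apply: big1 => t _.
  by rewrite /stopped /= vW /= andbF.
apply: eq_bigr => u _; rewrite mulr_sumr [RHS]big_mkcond; apply: eq_bigr => t _ /=.
rewrite /stopped /= vW /=.
by case: ifP.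
Qed.

Lemma Pstop_rec (R : realType) (V : finType) (c : V -> V -> R) (W : {set V}) (v : V) (A : pred (seq V)) :
  conductance c ->
  Pstop c W v A = if v \in W then (if A [:: v] then 1 else 0)%:E else
    (\sum_(u : V) (trans c v u)%:E * Pstop c W u (fun s => A (v :: s)))%E.
Proof.
move=> hc; rewrite PstopE nneseries_recl //; last by move=> k _; rewrite lee_fin Tn_ge0.
rewrite -(nneseries_addn 1); last by move=> k; rewrite lee_fin Tn_ge0.
under eq_eseriesr do rewrite addn1 TnS.
rewrite Tn0; have [vW|vW] := boolP (v \in W) => /=.
  by rewrite eseries0 ?adde0 //; case: (A _).
rewrite add0e.

under eq_eseriesr do rewrite -sumEFin.
rewrite nneseries_sum; last by move=> u j _; rewrite lee_fin mulr_ge0 ?trans_ge0 ?Tn_ge0.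
apply: eq_bigr => u _.
under eq_eseriesr do rewrite EFinM.
by rewrite nneseriesZl // => k _; rewrite lee_fin Tn_ge0.
Qed.

Lemma Pstop_ge0 (R : realType) (V : finType) (c : V -> V -> R) (W : {set V}) (v : V) (A : pred (seq V)) :
  conductance c -> (0 <= Pstop c W v A)%E.
Proof. by move=> hc; rewrite PstopE nneseries_ge0 // => n _ _; rewrite lee_fin Tn_ge0. Qed.

Lemma sum_trans_le1 (R : realType) (V : finType) (c : V -> V -> R) v :
  \sum_u trans c v u <= 1.
Proof.
rewrite /trans -mulr_suml -/(pi_c c v).
have [->|p0] := eqVneq (pi_c c v) 0; first by rewrite mul0r ler01.
by rewrite divff.
Qed.

Lemma partial_le1 (R : realType) (V : finType) (c : V -> V -> R) W :
  conductance c -> forall N v A, \sum_(0 <= n < N) Tn c W n v A <= 1.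
Proof.
move=> hc; elim=> [|N IH] v A; first by rewrite big_geq.
rewrite big_nat_recl // Tn0.
under eq_bigr do rewrite TnS.
have [vW|vW] := boolP (v \in W) => /=.
  rewrite big1 ?addr0; first by case: (A _).
  by [].
rewrite add0r.
rewrite (exchange_big_dep xpredT) //=.
apply: (le_trans _ (sum_trans_le1 c v)); apply: ler_sum => u _.
rewrite -mulr_sumr; apply: ler_piMr; first exact: trans_ge0.
exact: IH.
Qed.

Lemma Pstop_le1 (R : realType) (V : finType) (c : V -> V -> R) (W : {set V}) (v : V) (A : pred (seq V)) :
  conductance c -> (Pstop c W v A <= 1)%E.
Proof.
move=> hc; rewrite PstopE; apply: lime_le.
  by apply: is_cvg_nneseries => n _ _; rewrite lee_fin Tn_ge0.
by apply: nearW => N; rewrite sumEFin lee_fin partial_le1.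
Qed.

Lemma Pstop_fin (R : realType) (V : finType) (c : V -> V -> R) (W : {set V}) (v : V) (A : pred (seq V)) :
  conductance c -> Pstop c W v A = (fine (Pstop c W v A))%:E.
Proof.
move=> hc; rewrite fineK // ge0_fin_numE ?Pstop_ge0 //.
by rewrite (le_lt_trans (Pstop_le1 W v A hc)) // ltey.
Qed.

Lemma Pstop_ext (R : realType) (V : finType) (c : V -> V -> R) W v A B :
  (forall t, A (v :: t) = B (v :: t)) -> Pstop c W v A = Pstop c W v B.
Proof.
move=> AB; rewrite !PstopE; apply: eq_eseriesr => n _; congr EFin.
by apply: eq_bigl => t; rewrite AB.
Qed.

Lemma Pstop_mono (R : realType) (V : finType) (c : V -> V -> R) W v (A B : pred (seq V)) :
  conductance c -> (forall t, A (v :: t) -> B (v :: t)) ->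
  (Pstop c W v A <= Pstop c W v B)%E.
Proof.
move=> hc AB; rewrite !PstopE; apply: lee_nneseries.
  by move=> n _ _; rewrite lee_fin Tn_ge0.
move=> n _; rewrite lee_fin /Tn [X in X <= _]big_mkcond [X in _ <= X]big_mkcond.
apply: ler_sum => t _; case: (stopped _ _ _) => //=.
case At: (A _); first by rewrite (AB _ At).
by case: (B _) => //; rewrite pathprob_ge0.
Qed.

Lemma Pstop_compl (R : realType) (V : finType) (c : V -> V -> R) W v (A : pred (seq V)) :
  conductance c ->
  (Pstop c W v A + Pstop c W v (fun s => ~~ A s) = Pstop c W v xpredT)%E.
Proof.
move=> hc; rewrite !PstopE -nneseriesD; first last.
- by move=> n _ _; rewrite lee_fin Tn_ge0.
- by move=> n _ _; rewrite lee_fin Tn_ge0.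
apply: eq_eseriesr => n _; rewrite -EFinD; congr EFin.
rewrite /Tn [in RHS](bigID (fun t : n.-tuple V => A (v :: t))) /=.
by congr (_ + _); apply: eq_bigl => t; rewrite andbT.
Qed.

Lemma trans_adj (R : realType) (V : finType) (c : V -> V -> R) u x :
  conductance c -> 0 < trans c u x -> adj c u x.
Proof.
move=> [_ c0] ht; rewrite /adj lt_def c0 andbT.
by apply/eqP => h; move: ht; rewrite /trans h mul0r ltxx.
Qed.

Lemma sum_trans1 (R : realType) (V : finType) (c : V -> V -> R) u w :
  conductance c -> adj c u w -> \sum_x trans c u x = 1.
Proof.
move=> [_ c0] hw; rewrite /trans -mulr_suml -/(pi_c c u) divff //.
rewrite /pi_c; apply/lt0r_neq0.
rewrite (bigD1 w) //= ltr_pwDl // sumr_ge0 // => *; exact: c0.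
Qed.

Lemma pi_pos (R : realType) (V : finType) (c : V -> V -> R) u w :
  conductance c -> adj c u w -> 0 < pi_c c u.
Proof.
move=> [_ c0] hw; rewrite /pi_c (bigD1 w) //= ltr_pwDl // sumr_ge0 // => *; exact: c0.
Qed.

Lemma MP (R : realType) (V : finType) (c : V -> V -> R) (K : pred V) (g : V -> R) :
  conductance c -> connected_graph c ->
  (forall v, K v -> g v <= \sum_u trans c v u * g u) ->
  (exists z, ~~ K z) ->
  forall v, K v -> exists z u, [/\ ~~ K z, K u, adj c u z & g v <= g z].
Proof.
move=> hc hconn hsub [z0 Kz0] v Kv.
apply/not_existsP => H.
have H' : forall z u, ~~ K z -> K u -> adj c u z -> g z < g v.
  move=> z u Kz Ku auz; rewrite ltNge; apply/negP => gvz.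
  by apply: (H z); exists u; split.
case: (@arg_maxP _ _ V v K g Kv) => v0 Kv0 maxv0.
set M := g v0 in maxv0 *.
have step : forall u, K u -> g u = M -> forall w, adj c u w -> K w && (g w == M).
  move=> u Ku guM w auw; apply/negPn/negP => bad.
  have gwM : g w < M.
    case Kw: (K w) bad => /= bad.
      by by rewrite lt_def eq_sym bad /=; exact: maxv0.
    by apply: (lt_le_trans (H' w u (negbT Kw) Ku auw)); exact: maxv0.
  have le_each : forall x, trans c u x * g x <= trans c u x * M.
    move=> x; have := trans_ge0 hc u x; rewrite le_eqVlt => /orP[/eqP <-|tp].
      by rewrite !mul0r.
    rewrite ler_pM2l //; have aux := trans_adj hc tp.
    case Kx: (K x); first exact: maxv0.
    by apply/ltW/(lt_le_trans (H' x u (negbT Kx) Ku aux)); exact: maxv0.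
  have : \sum_x trans c u x * g x < \sum_x trans c u x * M.
    rewrite (bigD1 w) //= [X in _ < X](bigD1 w) //=.
    apply: ltr_leD; last by apply: ler_sum => x _; exact: le_each.
    rewrite ltr_pM2l //; rewrite lt_def trans_ge0 // andbT.
    by apply: lt0r_neq0; apply: divr_gt0; [exact: auw | exact: pi_pos hc auw].
  rewrite -mulr_suml (sum_trans1 hc auw) mul1r.
  by apply/negP; rewrite -leNgt -guM; exact: hsub.
have gv0 : g v0 = M by [].
clearbody M.
have [p pth zl] := connectP (hconn v0 z0).
suff : K (last v0 p) by rewrite -zl (negbTE Kz0).
elim: p v0 Kv0 gv0 pth {zl} => [|w p IH] u Ku guM /=; first by [].
case/andP => auw pth; have /andP[Kw /eqP gwM] := step u Ku guM w auw.
exact: IH.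
Qed.

Definition pr (R : realType) (V : finType) (c : V -> V -> R) (W : {set V}) (v : V) (A : pred (seq V)) :=
  fine (Pstop c W v A).

Lemma pr_ge0 (R : realType) (V : finType) (c : V -> V -> R) (W : {set V}) (v : V) (A : pred (seq V)) :
  conductance c -> 0 <= pr c W v A.
Proof. by move=> hc; rewrite /pr fine_ge0 // Pstop_ge0. Qed.

Lemma pr_le1 (R : realType) (V : finType) (c : V -> V -> R) (W : {set V}) (v : V) (A : pred (seq V)) :
  conductance c -> pr c W v A <= 1.
Proof. by move=> hc; rewrite -lee_fin /pr -Pstop_fin // Pstop_le1. Qed.

Lemma pr_W (R : realType) (V : finType) (c : V -> V -> R) (W : {set V}) (v : V) (A : pred (seq V)) :
  conductance c -> v \in W -> pr c W v A = if A [:: v] then 1 else 0.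
Proof. by move=> hc vW; rewrite /pr Pstop_rec // vW; case: (A _). Qed.

Lemma pr_rec (R : realType) (V : finType) (c : V -> V -> R) (W : {set V}) (v : V) (A : pred (seq V)) :
  conductance c -> v \notin W ->
  pr c W v A = \sum_u trans c v u * pr c W u (fun s => A (v :: s)).
Proof.
move=> hc vW; rewrite /pr Pstop_rec // (negbTE vW).
under eq_bigr do rewrite (Pstop_fin _ _ _ hc) -EFinM.
by rewrite sumEFin.
Qed.

Lemma has_nbr (R : realType) (V : finType) (c : V -> V -> R) v z :
  connected_graph c -> v != z -> exists w, adj c v w.
Proof.
move=> hconn vz; have [p pth zl] := connectP (hconn v z).
case: p pth zl => [|w p] /=; first by move=> _ zv; rewrite zv eqxx in vz.
by case/andP => avw _ _; exists w.
Qed.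

Lemma pr_total (R : realType) (V : finType) (c : V -> V -> R) (W : {set V}) (v : V) :
  conductance c -> connected_graph c -> W != finset.set0 ->
  pr c W v xpredT = 1.
Proof.
move=> hc hconn /set0Pn[w0 w0W].
have hW : forall z, z \in W -> 1 - pr c W z xpredT = 0.
  by move=> z zW; rewrite pr_W // subrr.
have [vW|vW] := boolP (v \in W); first by rewrite pr_W.
have hsub : forall u, u \notin W ->
    1 - pr c W u xpredT <= \sum_x trans c u x * (1 - pr c W x xpredT).
  move=> u uW; have [w auw] : exists w, adj c u w.
    by apply: (has_nbr (z := w0)) => //; apply: contraNneq uW => ->.
  rewrite (pr_rec _ hc uW) /=.
  rewrite -[X in X - _](sum_trans1 hc auw) -sumrB.
  by apply: ler_sum => x _; rewrite mulrBr mulr1.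
have hex : exists z, ~~ (z \notin W) by exists w0; rewrite negbK.
have [z [u [/negPn zW _ _ h]]] := @MP R V c (fun z => z \notin W)
   (fun z => 1 - pr c W z xpredT) hc hconn hsub hex v vW.
move: h => /=; rewrite (hW z zW) subr_le0 => h.
by apply/eqP; rewrite eq_le pr_le1 // h.
Qed.

Lemma pr_ext (R : realType) (V : finType) (c : V -> V -> R) (W : {set V}) (v : V) (A B : pred (seq V)) :
  (forall t, A (v :: t) = B (v :: t)) -> pr c W v A = pr c W v B.
Proof. by move=> h; rewrite /pr (Pstop_ext _ _ h). Qed.

Lemma pr_mono (R : realType) (V : finType) (c : V -> V -> R) (W : {set V}) (v : V) (A B : pred (seq V)) :
  conductance c -> (forall t, A (v :: t) -> B (v :: t)) -> pr c W v A <= pr c W v B.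
Proof. by move=> hc h; rewrite -lee_fin /pr -!Pstop_fin // Pstop_mono. Qed.

Lemma pr_compl (R : realType) (V : finType) (c : V -> V -> R) (W : {set V}) (v : V) (A : pred (seq V)) :
  conductance c -> connected_graph c -> W != finset.set0 ->
  pr c W v A + pr c W v (fun s => ~~ A s) = 1.
Proof.
move=> hc hconn hW; apply: EFin_inj; rewrite EFinD /pr -!Pstop_fin // Pstop_compl //.
by rewrite Pstop_fin // -/(pr c W v xpredT) pr_total.
Qed.

Definition hf (R : realType) (V : finType) (c : V -> V -> R) (W : {set V}) (B : {set V}) (v : V) :=
  pr c W v (fun s => last v s \in B).

Lemma hf_harm (R : realType) (V : finType) (c : V -> V -> R) (W B : {set V}) (v : V) :
  conductance c -> v \notin W -> hf c W B v = \sum_u trans c v u * hf c W B u.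
Proof.
move=> hc vW; rewrite /hf (pr_rec _ hc vW); apply: eq_bigr => u _; congr (_ * _).

Qed.

Lemma hf_W (R : realType) (V : finType) (c : V -> V -> R) (W B : {set V}) (v : V) :
  conductance c -> v \in W -> hf c W B v = if v \in B then 1 else 0.
Proof. by move=> hc vW; rewrite /hf pr_W. Qed.

Lemma path_avoid (V : finType) (e : rel V) (S : seq V) y p :
  path [rel a b | e a b && (b \notin S)] y p -> all (fun b => b \notin S) p.
Proof.
elim: p y => [|w p IH] y //= /andP[/andP[_ wS] pth]; rewrite wS /=; exact: IH pth.
Qed.

Lemma disc_has (R : realType) (V : finType) (c : V -> V -> R) (W : {set V}) (f : V -> R) (y : V) (S : seq V) :
  conductance c -> connected_graph c -> W != finset.set0 ->
  (forall v, v \notin W -> f v = \sum_u trans c v u * f u) ->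
  disconnects c S y W -> has (fun v => f y <= f v) S.
Proof.
move=> hc hconn /set0Pn[w0 w0W] fh hd.
have [yS|yS] := boolP (y \in S); first by apply/hasP; exists y.
pose e := [rel a b | adj c a b && (b \notin S)].
pose K := fun v => connect e y v.
have KW : forall v, K v -> v \notin W.
  move=> v /connectP[p pth ->]; apply/negP => lW.
  have sube : subrel e (adj c) by move=> a b /andP[].
  have := hd p (sub_path sube pth) lW.
  rewrite /= (negbTE yS) /=; apply/negP; rewrite -all_predC.
  by have := path_avoid pth.
have hsub : forall v, K v -> f v <= \sum_u trans c v u * f u.
  by move=> v Kv; rewrite -fh ?KW.
have hex : exists z, ~~ K z by exists w0; apply/negP => /KW; rewrite w0W.
have [z [u [Kz Ku auz le]]] := MP hc hconn hsub hex (connect0 e y).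
apply/hasP; exists z => //.
apply/negPn/negP => zS; move/negP: Kz; apply.
by apply: (connect_trans Ku); apply: connect1; rewrite /= auz zS.
Qed.

From mathcomp Require Import lra.

Lemma main_dir (R : realType) (V : finType) (c : V -> V -> R) (W B : {set V}) (x y : V) :
  conductance c -> connected_graph c -> W != finset.set0 ->
  hf c W B y - hf c W B x <= pr c W x (fun p => ~~ `[< disconnects c p y W >]).
Proof.
move=> hc hconn hW.
have [w0 w0W] := set0Pn _ hW.
set f := hf c W B.
have f0 : forall v, 0 <= f v by move=> v; exact: pr_ge0.
have f1 : forall v, f v <= 1 by move=> v; exact: pr_le1.
set m := f y; set a := f x.
have [ma|am] := leP m a.
  by apply: (le_trans _ (pr_ge0 _ _ _ hc)); rewrite subr_le0.
pose H := fun s : seq V => has (fun v => m <= f v) s.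
pose q := fun v => pr c W v H.
have q0 : forall v, 0 <= q v by move=> v; exact: pr_ge0.
have q1 : forall v, q v <= 1 by move=> v; exact: pr_le1.
have m0 : 0 <= m by apply: f0.
have m1 : m <= 1 by apply: f1.
have claim2 : forall v, m * q v <= f v.
  pose K := fun v => (v \notin W) && (f v < m).
  pose g := fun v => m * q v - f v.
  have out : forall v, ~~ K v -> g v <= 0.
    move=> v; rewrite /K negb_and negbK -leNgt => /orP[vW|Uv]; rewrite /g subr_le0.
      rewrite /q pr_W // /H /= orbF.
      by case: ifP => mv; rewrite ?mulr1 ?mulr0 // f0.
    by apply: le_trans Uv; apply: ler_piMr.
  have hsub : forall v, K v -> g v <= \sum_u trans c v u * g u.
    move=> v /andP[vW fvm].
    have qv : q v = \sum_u trans c v u * q u.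
      rewrite /q (pr_rec _ hc vW); apply: eq_bigr => u _; congr (_ * _).
      by apply: pr_ext => t; rewrite /H /= leNgt fvm.
    rewrite /g qv {1}/f (hf_harm _ hc vW) -/f mulr_sumr -sumrB.
    by apply: ler_sum => u _; rewrite mulrBr mulrCA.
  have hex : exists z, ~~ K z by exists w0; rewrite /K w0W.
  move=> v; rewrite -subr_le0 -/(g v).
  have [Kv|Kv] := boolP (K v); last exact: out.
  have [z [u [Kz _ _ le]]] := MP hc hconn hsub hex Kv.
  exact: (le_trans le (out z Kz)).
have claim1 : pr c W x (fun p => `[< disconnects c p y W >]) <= q x.
  apply: pr_mono => // t /asboolP hd.
  exact: (disc_has hc hconn hW (fun v vW => hf_harm B hc vW) hd).
have hsum : pr c W x (fun p => `[< disconnects c p y W >]) +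
            pr c W x (fun p => ~~ `[< disconnects c p y W >]) = 1.
  exact: pr_compl.
have := claim2 x; rewrite -/a => h2.
have := q0 x; have := q1 x => hq1 hq0.
nra.
Qed.

Lemma hf_compl (R : realType) (V : finType) (c : V -> V -> R) (W B : {set V}) (v : V) :
  conductance c -> connected_graph c -> W != finset.set0 ->
  hf c W (~: B) v = 1 - hf c W B v.
Proof.
move=> hc hconn hW; have := pr_compl v (fun s => last v s \in B) hc hconn hW.
rewrite /hf => <-; rewrite addrAC subrr add0r; apply: pr_ext => t.
by rewrite finset.in_setC.
Qed.

Theorem mainTheorem4 (R : realType) (V : finType) (c : V -> V -> R)
  (W : {set V}) :
  conductance c -> connected_graph c -> planar c -> (W != finset.set0) ->
  forall x y : V, x \notin W -> y \notin W ->
  (dTV_hit c W x y <=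
     Pstop c W x (fun p => ~~ `[< disconnects c p y W >]))%E.
Proof.
move=> hc hconn _ hW x y xW yW.
rewrite /dTV_hit (Pstop_fin _ _ _ hc).
apply: (big_ind (fun e => e <= _)%E).
- exact: leNye.
- by move=> e1 e2 h1 h2; rewrite ge_max h1 h2.
move=> B _; rewrite /hitlaw (Pstop_fin W x (fun p => last x p \in B) hc)
  (Pstop_fin W y (fun p => last y p \in B) hc) -EFinB abse_EFin lee_fin ler_norml.
have h1 := main_dir B x y hc hconn hW.
have h2 := main_dir (~: B) x y hc hconn hW.
rewrite !hf_compl // in h2.
rewrite /hf /pr in h1 h2.
apply/andP; split; lra.
Qed.
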